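(* If $(a,b)\in R_3$, then $J(a,b)\ge \frac{9+8\sqrt{10}}{215}$.
   Context: For $(a,b)\in\mathbb R^2$ define $f_{a,b}(x_1,x_2)=[b+a(x_1+x_2)+x_1x_2](2-x_1-x_2)$. Let $X_1=\{(x_1,x_2):-1\le x_1\le 0,\ -x_1\le x_2\le 1\}$ and $X_2=\{(x_1,x_2):-1\le x_1\le0,\ x_1\le x_2\le -x_1\}$. Let $\chi_{a,b}=\max_{X_1\cup X_2}f_{a,b}$, $m_{a,b}=\min_{X_1\cup X_2}f_{a,b}$, $R=\{(a,b)\in\mathbb R^2: m_{a,b}>0\}$, and for $(a,b)\in R$ let $J(a,b)=\frac{\chi_{a,b}-m_{a,b}}{\chi_{a,b}+m_{a,b}}$. Whenever $(1-2a)^2\ge3(b-2a)$ let $t_-=\frac{2a-1-\sqrt{(1-2a)^2-3(b-2a)}}{3/2}$. Let $R_3=\{(a,b)\in R:(1-2a)^2\ge3(b-2a)>0,\ t_-\in[0,2]\}$. *)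

(* Defs.v *)
From Stdlib Require Import Reals Lra.
Open Scope R_scope.

Definition f (a b x1 x2 : R) : R :=
  (b + a * (x1 + x2) + x1 * x2) * (2 - x1 - x2).

Definition X1 (x1 x2 : R) : Prop := -1 <= x1 <= 0 /\ - x1 <= x2 <= 1.
Definition X2 (x1 x2 : R) : Prop := -1 <= x1 <= 0 /\ x1 <= x2 <= - x1.
Definition X (x1 x2 : R) : Prop := X1 x1 x2 \/ X2 x1 x2.

Definition is_max_f (a b chi : R) : Prop :=
  (exists x1 x2, X x1 x2 /\ f a b x1 x2 = chi) /\
  (forall x1 x2, X x1 x2 -> f a b x1 x2 <= chi).

Definition is_min_f (a b m : R) : Prop :=
  (exists x1 x2, X x1 x2 /\ f a b x1 x2 = m) /\
  (forall x1 x2, X x1 x2 -> m <= f a b x1 x2).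

Definition J (chi m : R) : R := (chi - m) / (chi + m).

Definition tminus (a b : R) : R :=
  (2 * a - 1 - sqrt ((1 - 2 * a) ^ 2 - 3 * (b - 2 * a))) / (3 / 2).

Definition in_R3 (a b m : R) : Prop :=
  0 < m /\
  3 * (b - 2 * a) <= (1 - 2 * a) ^ 2 /\ 0 < 3 * (b - 2 * a) /\
  0 <= tminus a b <= 2.

(* Main.v *)
Require Import Defs.
From Stdlib Require Import Reals Lra Psatz.
Open Scope R_scope.

Definition A4 t u := 2*(2+t)*(2-t-t^2) + 2*u*(2+t)^2.
Definition B14 t u := 16+16*t*u-12*t^2.
Definition B24 t u := 8*u+8*t*u-6*t^2.
Definition B34 t u := 6+6*u+4*t*u-3*t^2.
Definition G1 t u r := 243*A4 t u - (272+20*r)*B14 t u.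
Definition G2 t u r := 243*A4 t u - (272+20*r)*B24 t u.
Definition G3 t u r := 243*A4 t u - (272+20*r)*B34 t u.
Definition Fac t r := 9*t - 14 + 4*r.
Definition q1a t r := ((-440) + (-80)*r + (244)*t + (64)*t*r + (-66)*t^2 + (-12)*t^2*r + (27)*t^3).
Definition be1a t r := ((1944) + (-2408)*t + (-320)*t*r + (486)*t^2).
Lemma id1a t u r : 2*(2-2*t)*G1 t u r = 2*Fac t r * q1a t r + be1a t r * (2*(2-2*t)*u - ((8) + (-3)*t^2)) + 2*(r*r-10)*((320) + (-256)*t + (48)*t^2).
Proof. unfold G1, A4, B14, Fac, q1a, be1a. ring. Qed.
Definition q1b t r := ((96) + (96)*r + (4)*t + (40)*t*r + (-36)*t^2 + (-36)*t^2*r + (81)*t^3).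
Definition be1b t r := ((1944) + (-2408)*t + (-320)*t*r + (486)*t^2).
Lemma id1b t u r : 2*(3-6*t)*G1 t u r = 2*Fac t r * q1b t r + be1b t r * (2*(3-6*t)*u - ((10) + (-9)*t^2)) + 2*(r*r-10)*((-384) + (-160)*t + (144)*t^2).
Proof. unfold G1, A4, B14, Fac, q1b, be1b. ring. Qed.
Definition q2a t r := ((-440) + (-80)*r + (244)*t + (64)*t*r + (-66)*t^2 + (-12)*t^2*r + (27)*t^3).
Definition be2a t r := ((-232) + (-160)*r + (-232)*t + (-160)*t*r + (486)*t^2).
Lemma id2a t u r : 2*(2-2*t)*G2 t u r = 2*Fac t r * q2a t r + be2a t r * (2*(2-2*t)*u - ((8) + (-3)*t^2)) + 2*(r*r-10)*((320) + (-256)*t + (48)*t^2).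
Proof. unfold G2, A4, B24, Fac, q2a, be2a. ring. Qed.
Definition q2b t r := ((96) + (96)*r + (-120)*t + (96)*t*r + (-192)*t^2 + (24)*t^2*r + (-54)*t^3).
Definition be2b t r := ((-232) + (-160)*r + (-232)*t + (-160)*t*r + (486)*t^2).
Lemma id2b t u r : 2*(2+4*t)*G2 t u r = 2*Fac t r * q2b t r + be2b t r * (2*(2+4*t)*u - ((12) + (6)*t^2)) + 2*(r*r-10)*((-384) + (-384)*t + (-96)*t^2).
Proof. unfold G2, A4, B24, Fac, q2b, be2b. ring. Qed.
Definition q3a t r := ((96) + (96)*r + (-120)*t + (96)*t*r + (-192)*t^2 + (24)*t^2*r + (-54)*t^3).
Definition be3a t r := ((312) + (-120)*r + (856)*t + (-80)*t*r + (486)*t^2).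
Lemma id3a t u r : 2*(2+4*t)*G3 t u r = 2*Fac t r * q3a t r + be3a t r * (2*(2+4*t)*u - ((12) + (6)*t^2)) + 2*(r*r-10)*((-384) + (-384)*t + (-96)*t^2).
Proof. unfold G3, A4, B34, Fac, q3a, be3a. ring. Qed.

Lemma rb r : r*r = 10 -> 0 < r -> 3.162 < r < 3.1623.
Proof. intros H H0. split; nra. Qed.

Lemma pos_from D G : 0 < D -> 0 <= D * G -> 0 <= G.
Proof. intros. destruct (Rle_dec 0 G); auto. nra. Qed.

Lemma L1a t u r : r*r = 10 -> 0 < r -> 0 <= t -> Fac t r <= 0 ->
  0 <= 2*(2-2*t)*u - ((8) + (-3)*t^2) -> 0 <= G1 t u r.
Proof.
  intros Hr Hr0 Ht HF HW. pose proof (rb r Hr Hr0). unfold Fac in HF.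
  assert (Ht2 : t <= 0.16) by lra.
  assert (Hq : q1a t r <= 0). { unfold q1a. nra. }
  assert (Hb : 0 <= be1a t r). { unfold be1a. nra. }
  pose proof (id1a t u r) as E. rewrite Hr in E.
  apply (pos_from (2*(2-2*t))). lra.
  rewrite E. unfold Fac. nra.
Qed.

Lemma L1b t u r : r*r = 10 -> 0 < r -> t < 1/2 -> 0 <= Fac t r ->
  0 <= 2*(3-6*t)*u - ((10) + (-9)*t^2) -> 0 <= G1 t u r.
Proof.
  intros Hr Hr0 Ht HF HW. pose proof (rb r Hr Hr0). unfold Fac in HF.
  assert (Ht2 : 0.15 <= t) by lra.
  assert (Hq : 0 <= q1b t r). { unfold q1b. nra. }
  assert (Hb : 0 <= be1b t r). { unfold be1b. nra. }
  pose proof (id1b t u r) as E. rewrite Hr in E.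
  apply (pos_from (2*(3-6*t))). lra.
  rewrite E. unfold Fac. nra.
Qed.

Lemma L2a t u r : r*r = 10 -> 0 < r -> 0 <= t -> Fac t r <= 0 ->
  2*(2-2*t)*u - ((8) + (-3)*t^2) <= 0 -> 0 <= G2 t u r.
Proof.
  intros Hr Hr0 Ht HF HW. pose proof (rb r Hr Hr0). unfold Fac in HF.
  assert (Ht2 : t <= 0.16) by lra.
  assert (Hq : q2a t r <= 0). { unfold q2a. nra. }
  assert (Hb : be2a t r <= 0). { unfold be2a. nra. }
  pose proof (id2a t u r) as E. rewrite Hr in E.
  apply (pos_from (2*(2-2*t))). lra.
  rewrite E. unfold Fac. nra.
Qed.

Lemma L2b t u r : r*r = 10 -> 0 < r -> t <= 1 -> 0 <= Fac t r ->
  2*(2+4*t)*u - ((12) + (6)*t^2) <= 0 -> 0 <= G2 t u r.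
Proof.
  intros Hr Hr0 Ht HF HW. pose proof (rb r Hr Hr0). unfold Fac in HF.
  assert (Ht2 : 0.15 <= t) by lra.
  assert (Hq : 0 <= q2b t r). { unfold q2b. nra. }
  assert (Hb : be2b t r <= 0). { unfold be2b. nra. }
  pose proof (id2b t u r) as E. rewrite Hr in E.
  apply (pos_from (2*(2+4*t))). lra.
  rewrite E. unfold Fac. nra.
Qed.

Lemma L3a t u r : r*r = 10 -> 0 < r -> t <= 1 -> 0 <= Fac t r ->
  0 <= 2*(2+4*t)*u - ((12) + (6)*t^2) -> 0 <= G3 t u r.
Proof.
  intros Hr Hr0 Ht HF HW. pose proof (rb r Hr Hr0). unfold Fac in HF.
  assert (Ht2 : 0.15 <= t) by lra.
  assert (Hq : 0 <= q3a t r). { unfold q3a. nra. }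
  assert (Hb : 0 <= be3a t r). { unfold be3a. nra. }
  pose proof (id3a t u r) as E. rewrite Hr in E.
  apply (pos_from (2*(2+4*t))). lra.
  rewrite E. unfold Fac. nra.
Qed.

Lemma L3b t u r : r*r = 10 -> 0 < r -> 1 <= t <= 2 -> 3*t <= 2*u -> 0 <= G3 t u r.
Proof.
  intros Hr Hr0 Ht Hu. pose proof (rb r Hr Hr0).
  assert (Hb : 0 <= be3a t r). { unfold be3a. nra. }
  unfold G3, A4, B34.
  assert (E : 243 * (2 * (2 + t) * (2 - t - t ^ 2) + 2 * u * (2 + t) ^ 2) -
     (272 + 20 * r) * (6 + 6 * u + 4 * t * u - 3 * t ^ 2)
     = be3a t r * u + (243 * (2 * (2 + t) * (2 - t - t ^ 2)) - (272 + 20 * r) * (6 - 3 * t ^ 2)))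
    by (unfold be3a; ring).
  rewrite E.
  assert (H2 : be3a t r * (3*t) <= be3a t r * (2*u)) by (apply Rmult_le_compat_l; lra).
  unfold be3a in *. nra.
Qed.

Lemma C1 t u r : r*r = 10 -> 0 < r -> 0 <= t <= 2 -> 3*t <= 2*u ->
  B14 t u <= B24 t u -> B14 t u <= B34 t u -> 0 <= G1 t u r.
Proof.
  intros Hr Hr0 Ht Hu H12 H13. pose proof (rb r Hr Hr0). unfold B14, B24, B34 in *.
  destruct (Rlt_dec t (1/2)) as [th|th].
  - destruct (Rle_dec (Fac t r) 0) as [cf|cf].
    + apply L1a; auto; lra.
    + apply L1b; auto; lra.
  - exfalso. destruct (Rle_dec t 1) as [t1|t1].
    + assert (0 <= u*(2*t-1)) by (apply Rmult_le_pos; lra). nra.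
    + assert (0 <= (2*u-3*t)*(t-1)) by (apply Rmult_le_pos; lra). nra.
Qed.

Lemma C2 t u r : r*r = 10 -> 0 < r -> 0 <= t <= 2 -> 3*t <= 2*u ->
  B24 t u <= B14 t u -> B24 t u <= B34 t u -> 0 <= G2 t u r.
Proof.
  intros Hr Hr0 Ht Hu H12 H13. pose proof (rb r Hr Hr0). unfold B14, B24, B34 in *.
  destruct (Rle_dec t 1) as [th|th].
  - destruct (Rle_dec (Fac t r) 0) as [cf|cf].
    + apply L2a; auto; lra.
    + apply L2b; auto; lra.
  - exfalso.
    assert (0 <= (2*u-3*t)*(2+4*t)) by (apply Rmult_le_pos; lra). nra.
Qed.

Lemma C3 t u r : r*r = 10 -> 0 < r -> 0 <= t <= 2 -> 3*t <= 2*u ->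
  B34 t u <= B14 t u -> B34 t u <= B24 t u -> 0 <= G3 t u r.
Proof.
  intros Hr Hr0 Ht Hu H12 H13. pose proof (rb r Hr Hr0). unfold B14, B24, B34 in *.
  destruct (Rle_dec t 1) as [th|th].
  - destruct (Rlt_dec (Fac t r) 0) as [cf|cf].
    + exfalso. unfold Fac in cf.
      assert (t < 1/2) by lra.
      assert (Hx : (6+3*t^2)*(6-12*t) <= (2+4*t)*(10-9*t^2)).
      { assert (0 <= (2+4*t)*u - (6+3*t^2)) by lra.
        assert (0 <= (6-12*t)*((2+4*t)*u - (6+3*t^2))) by (apply Rmult_le_pos; lra).
        assert (0 <= (2+4*t)*((10-9*t^2) - (6-12*t)*u)) by (apply Rmult_le_pos; lra).
        nra. }
      assert (Hy : 0 < (-(9*t-14+4*r))*(-(9*t-14-4*r))) by (apply Rmult_lt_0_compat; lra).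
      assert (Hz : (-(9*t-14+4*r))*(-(9*t-14-4*r)) = 81*t^2 - 252*t + 196 - 16*(r*r)) by ring.
      rewrite Hz, Hr in Hy. nra.
    + apply L3a; auto; lra.
  - apply L3b; auto; lra.
Qed.

Lemma core t u r M : r*r = 10 -> 0 < r -> 0 <= t <= 2 -> 3*t <= 2*u ->
  4*M <= B14 t u -> 4*M <= B24 t u -> 4*M <= B34 t u ->
  (272+20*r)*(4*M) <= 243 * A4 t u.
Proof.
  intros Hr Hr0 Ht Hu H1 H2 H3. pose proof (rb r Hr Hr0).
  assert (K : 0 <= 272 + 20*r) by lra.
  destruct (Rle_lt_dec (B14 t u) (B24 t u)) as [c12|c12];
  destruct (Rle_lt_dec (B14 t u) (B34 t u)) as [c13|c13];
  destruct (Rle_lt_dec (B24 t u) (B34 t u)) as [c23|c23].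
  - pose proof (C1 t u r Hr Hr0 Ht Hu c12 c13) as G.
    pose proof (Rmult_le_compat_l _ _ _ K H1). unfold G1 in G. lra.
  - pose proof (C1 t u r Hr Hr0 Ht Hu c12 c13) as G.
    pose proof (Rmult_le_compat_l _ _ _ K H1). unfold G1 in G. lra.
  - lra.
  - pose proof (C3 t u r Hr Hr0 Ht Hu ltac:(lra) ltac:(lra)) as G.
    pose proof (Rmult_le_compat_l _ _ _ K H3). unfold G3 in G. lra.
  - pose proof (C2 t u r Hr Hr0 Ht Hu ltac:(lra) ltac:(lra)) as G.
    pose proof (Rmult_le_compat_l _ _ _ K H2). unfold G2 in G. lra.
  - pose proof (C3 t u r Hr Hr0 Ht Hu ltac:(lra) ltac:(lra)) as G.
    pose proof (Rmult_le_compat_l _ _ _ K H3). unfold G3 in G. lra.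
  - pose proof (C2 t u r Hr Hr0 Ht Hu ltac:(lra) ltac:(lra)) as G.
    pose proof (Rmult_le_compat_l _ _ _ K H2). unfold G2 in G. lra.
  - pose proof (C3 t u r Hr Hr0 Ht Hu ltac:(lra) ltac:(lra)) as G.
    pose proof (Rmult_le_compat_l _ _ _ K H3). unfold G3 in G. lra.
Qed.

Theorem propositionA9 (a b chi m : R) :
  is_max_f a b chi -> is_min_f a b m -> in_R3 a b m ->
  J chi m >= (9 + 8 * sqrt 10) / 215.
Proof.
  intros [_ Hchi] [_ Hm] [Hm0 [HD [Hpos Ht]]].
  set (r := sqrt 10).
  assert (Hr : r*r = 10) by (apply sqrt_sqrt; lra).
  assert (Hr0 : 0 < r) by (apply sqrt_lt_R0; lra).
  pose proof (rb r Hr Hr0).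
  set (D := (1 - 2 * a) ^ 2 - 3 * (b - 2 * a)) in *.
  set (s := sqrt D).
  assert (Hs : s*s = D) by (apply sqrt_sqrt; unfold D; lra).
  assert (Hs0 : 0 <= s) by apply sqrt_pos.
  set (t := tminus a b) in *.
  assert (Etd : t = (2*a - 1 - s) / (3/2)) by reflexivity.
  clearbody t.
  assert (Es : s = (2*a-1) - 3/2*t) by (rewrite Etd; field).
  assert (Hb : b = 2*a + (2*a-1)*t - 3/4*t^2).
  { unfold D in Hs. rewrite Es in Hs. nra. }
  assert (Hu : 3*t <= 2*(2*a-1)) by lra.
  assert (Fc : Defs.f a b (-t/2) (-t/2) <= chi).
  { apply Hchi. right. unfold X2. lra. }
  assert (F1 : m <= Defs.f a b (-1) (-1)) by (apply Hm; right; unfold X2; lra).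
  assert (F2 : m <= Defs.f a b (-1) 1) by (apply Hm; left; unfold X1; lra).
  assert (F3 : m <= Defs.f a b 0 1) by (apply Hm; left; unfold X1; lra).
  assert (EA : 4 * Defs.f a b (-t/2) (-t/2) = A4 t (2*a-1)) by (unfold Defs.f, A4; rewrite Hb; field).
  assert (E1 : 4 * Defs.f a b (-1) (-1) = B14 t (2*a-1)) by (unfold Defs.f, B14; rewrite Hb; field).
  assert (E2 : 4 * Defs.f a b (-1) 1 = B24 t (2*a-1)) by (unfold Defs.f, B24; rewrite Hb; field).
  assert (E3 : 4 * Defs.f a b 0 1 = B34 t (2*a-1)) by (unfold Defs.f, B34; rewrite Hb; field).
  pose proof (core t (2*a-1) r m Hr Hr0 Ht Hu ltac:(lra) ltac:(lra) ltac:(lra)) as C.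
  assert (Hc : (272 + 20*r) * m <= 243 * chi) by lra.
  assert (Hpos2 : 0 < chi + m) by nra.
  assert (N : 0 <= 215*(chi-m) - (9+8*r)*(chi+m)).
  { assert (0 <= (206 - 8*r) * (243*chi - (272+20*r)*m)) by (apply Rmult_le_pos; lra).
    nra. }
  unfold J. apply Rle_ge.
  assert (Eq : (chi - m) / (chi + m) - (9 + 8 * r) / 215
     = (215*(chi-m) - (9+8*r)*(chi+m)) / (215*(chi+m))) by (field; lra).
  assert (0 <= (215*(chi-m) - (9+8*r)*(chi+m)) / (215*(chi+m))).
  { apply Rmult_le_pos; [lra | left; apply Rinv_0_lt_compat; lra]. }
  fold r. lra.
Qed.
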